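(* Let $n\ge2$ and consider an equation $\sum_{i,j=1}^n f_{ij}({\bf p})u_{x_ix_j}=0$, $p^i=u_{x_i}$, with $(f_{ij})$ symmetric and nondegenerate, with inverse $(f^{ij})$. Define $$s_k=\frac{f^{ij}}{(n+2)(1-n)}\left(\partial_kf_{ij}-n\,\partial_jf_{ik}\right),\qquad c_k=\frac{f^{ij}}{(n+2)(n-1)}\left((n+3)\partial_kf_{ij}-2(n+1)\partial_jf_{ik}\right),$$ $$a_{ijk}=\partial_kf_{ij}-(c_k+2s_k)f_{ij}-s_if_{kj}-s_jf_{ki},$$ where $\partial_k=\partial/\partial p^k$ and repeated indices are summed. The equation is linearizable by a transformation from the equivalence group $SL(n+1,\mathbb{R})$ if and only if (1) $a_{ijk}=0$ identically, and (2) $\partial_js_i-s_is_j=0$ for all $i,j$ (equivalently, the connection with Christoffel symbols $\Gamma^i_{jk}=s_j\delta^i_k+s_k\delta^i_j$ is flat).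
   Context: The equivalence group consists of transformations $\tilde{\bf x}=C{\bf x}+bu$, $\tilde u=c{\bf x}+\beta u$ with the corresponding $(n+1)\times(n+1)$ matrix in $SL(n+1,\mathbb{R})$; they act on the row vector ${\bf p}=(p^1,\dots,p^n)$ projectively by $\tilde{\bf p}=\kappa{\bf p}C^{-1}+cC^{-1}$, $\kappa=1/\det(C+b{\bf p})$, and on $F=(f_{ij})$ by $\tilde F=\kappa^{-1}(C+b{\bf p})F(C+b{\bf p})^t$. Linearizable means that the transformed coefficient matrix is proportional (by a function) to a constant matrix. *)

(* Defs.v *)
From HB Require Import structures.
From mathcomp Require Import all_boot all_order all_algebra.
From mathcomp Require Import all_classical all_reals all_analysis.
Set Implicit Arguments. Unset Strict Implicit. Unset Printing Implicit Defensive.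
Import Order.TTheory GRing.Theory Num.Theory.
Import numFieldNormedType.Exports.
Local Open Scope classical_set_scope.
Local Open Scope ring_scope.

Section Defs.
Variables (R : realType) (n : nat).

Definition ebasis (k : 'I_n) : 'rV[R]_n := delta_mx 0 k.

Definition pd (k : 'I_n) (g : 'rV[R]_n -> R) : 'rV[R]_n -> R :=
  fun p => derive g p (ebasis k).

Fixpoint iterpd (ks : seq 'I_n) (g : 'rV[R]_n -> R) : 'rV[R]_n -> R :=
  match ks with
  | [::] => g
  | k :: ks' => pd k (iterpd ks' g)
  end.

Definition smooth_on (U : set 'rV[R]_n) (g : 'rV[R]_n -> R) : Prop :=
  forall (ks : seq 'I_n) (p : 'rV[R]_n), U p -> differentiable (iterpd ks g) p.

Variable F : 'rV[R]_n -> 'M[R]_n.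

Definition fent (i j : 'I_n) : 'rV[R]_n -> R := fun p => F p i j.

Definition s_coef (k : 'I_n) : 'rV[R]_n -> R := fun p =>
  ((n.+2)%:R * (1 - n%:R))^-1 *
  \sum_(i < n) \sum_(j < n)
     invmx (F p) i j * (pd k (fent i j) p - n%:R * pd j (fent i k) p).

Definition c_coef (k : 'I_n) : 'rV[R]_n -> R := fun p =>
  ((n.+2)%:R * (n%:R - 1))^-1 *
  \sum_(i < n) \sum_(j < n)
     invmx (F p) i j * ((n.+3)%:R * pd k (fent i j) p
                        - 2 * (n.+1)%:R * pd j (fent i k) p).

Definition a_coef (i j k : 'I_n) : 'rV[R]_n -> R := fun p =>
  pd k (fent i j) p - (c_coef k p + 2 * s_coef k p) * F p i j
  - s_coef i p * F p k j - s_coef j p * F p k i.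

(* transformed coefficient matrix under the SL(n+1) element with upper blocks
   C (n x n) and b (n x 1):  kappa^{-1} (C + b p) F (C + b p)^T,
   kappa = 1 / det (C + b p) *)
Definition Ftrans (C : 'M[R]_n) (b : 'M[R]_(n, 1)) (p : 'rV[R]_n) : 'M[R]_n :=
  \det (C + b *m p) *: ((C + b *m p) *m F p *m (C + b *m p)^T).

(* the equation is linearizable on the set V by a single element
   [[C, b], [c, beta]] of the equivalence group SL(n+1,R): on V the transformed
   coefficient matrix is proportional (by a function) to a constant matrix K *)
Definition linearizable_on (V : set 'rV[R]_n) : Prop :=
  exists (C : 'M[R]_n) (b : 'M[R]_(n, 1)) (c : 'rV[R]_n) (beta : R),
    \det (block_mx C b c beta%:M : 'M[R]_(n + 1)) = 1 /\
    exists (K : 'M[R]_n) (lambda : 'rV[R]_n -> R),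
      forall p, V p ->
        (C + b *m p) \in unitmx /\ Ftrans C b p = lambda p *: K.

End Defs.

(* Main.v *)
Require Import Defs.
From HB Require Import structures.
From mathcomp Require Import all_boot all_order all_algebra.
From mathcomp Require Import all_classical all_reals all_analysis.
From mathcomp Require Import ring lra.
Import Order.TTheory GRing.Theory Num.Theory.
Import numFieldNormedType.Exports.
Local Open Scope classical_set_scope.
Local Open Scope ring_scope.
Set Implicit Arguments. Unset Strict Implicit. Unset Printing Implicit Defensive.
Section Alg.
Variables (R : realType) (n : nat).
Implicit Types (A : 'M[R]_n).

Lemma inv_sym A : A^T = A -> (invmx A)^T = invmx A.
Proof. by move=> h; rewrite trmx_inv h. Qed.

Lemma sumFiF A i k : A \in unitmx ->
  \sum_j invmx A i j * A j k = (i == k)%:R.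
Proof. by move=> u; have := mulVmx u; move/matrixP/(_ i k); rewrite !mxE. Qed.

Lemma sumFFi A i k : A \in unitmx ->
  \sum_j A i j * invmx A j k = (i == k)%:R.
Proof. by move=> u; have := mulmxV u; move/matrixP/(_ i k); rewrite !mxE. Qed.
End Alg.
Section Alg2.
Variables (R : realType) (n : nat).
Implicit Types (A : 'M[R]_n).

Lemma sum_dl (s : 'I_n -> R) k : \sum_i s i * (i == k)%:R = s k.
Proof.
rewrite (bigD1 k) //= eqxx mulr1 big1 ?addr0 // => i /negbTE ->; by rewrite mulr0.
Qed.
Lemma sum_dr (s : 'I_n -> R) k : \sum_i s i * (k == i)%:R = s k.
Proof. by rewrite -(sum_dl s k); apply: eq_bigr => i _; rewrite eq_sym. Qed.

Definition Sform A (D : 'I_n -> 'I_n -> 'I_n -> R) (k : 'I_n) : R :=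
  ((n.+2)%:R * (1 - n%:R))^-1 *
  \sum_(i < n) \sum_(j < n) invmx A i j * (D k i j - n%:R * D j i k).
Definition Cform A (D : 'I_n -> 'I_n -> 'I_n -> R) (k : 'I_n) : R :=
  ((n.+2)%:R * (n%:R - 1))^-1 *
  \sum_(i < n) \sum_(j < n) invmx A i j * ((n.+3)%:R * D k i j
                        - 2 * (n.+1)%:R * D j i k).

Lemma alg_main A D (g s : 'I_n -> R) : (2 <= n)%N -> A^T = A -> A \in unitmx ->
  (forall k i j, D k i j = g k * A i j + s i * A k j + s j * A k i) ->
  forall k, Sform A D k = s k /\ Cform A D k = g k - 2 * s k.
Proof.
move=> n2 hs u hD k.
have As i j : A i j = A j i by rewrite -{1}hs mxE.
have Fs i j : invmx A i j = invmx A j i by rewrite -{1}(inv_sym hs) mxE.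
set Fi := invmx A in Fs *.
have P1 : \sum_i \sum_j Fi i j * A i j = n%:R.
  transitivity (\sum_(i < n) (1 : R)); last by rewrite sumr_const card_ord.
  apply: eq_bigr => i _; rewrite (_ : 1 = (i == i)%:R); last by rewrite eqxx.
  rewrite -(sumFiF i i u).
  by apply: eq_bigr => j _; rewrite As.
have T : \sum_i \sum_j Fi i j * D k i j = n%:R * g k + 2 * s k.
  under eq_bigr => i _ do under eq_bigr => j _ do rewrite hD !mulrDr.
  under eq_bigr => i _ do rewrite !big_split.
  rewrite !big_split /=.
  have -> : \sum_i \sum_j Fi i j * (g k * A i j) = g k * n%:R.
    rewrite -P1 mulr_sumr; apply: eq_bigr => i _; rewrite mulr_sumr.
    by apply: eq_bigr => j _; rewrite mulrCA.
  have -> : \sum_i \sum_j Fi i j * (s i * A k j) = s k.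
    rewrite -(sum_dl s k); apply: eq_bigr => i _; rewrite -(sumFiF i k u) mulr_sumr.
    by apply: eq_bigr => j _; rewrite mulrCA As.
  have -> : \sum_i \sum_j Fi i j * (s j * A k i) = s k.
    rewrite exchange_big /= -(sum_dr s k); apply: eq_bigr => j _.
    rewrite -(sumFFi k j u) mulr_sumr.
    by apply: eq_bigr => i _; ring.
  ring.
have Q : \sum_i \sum_j Fi i j * D j i k = g k + (n%:R + 1) * s k.
  under eq_bigr => i _ do under eq_bigr => j _ do rewrite hD !mulrDr.
  under eq_bigr => i _ do rewrite !big_split.
  rewrite !big_split /=.
  have -> : \sum_i \sum_j Fi i j * (g j * A i k) = g k.
    rewrite exchange_big /= -(sum_dl g k); apply: eq_bigr => j _.
    rewrite -(sumFiF j k u) mulr_sumr.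
    by apply: eq_bigr => i _; rewrite mulrCA Fs.
  have -> : \sum_i \sum_j Fi i j * (s i * A j k) = s k.
    rewrite -(sum_dl s k); apply: eq_bigr => i _; rewrite -(sumFiF i k u) mulr_sumr.
    by apply: eq_bigr => j _; rewrite mulrCA.
  have -> : \sum_i \sum_j Fi i j * (s k * A j i) = s k * n%:R.
    rewrite -P1 mulr_sumr; apply: eq_bigr => i _; rewrite mulr_sumr.
    by apply: eq_bigr => j _; rewrite mulrCA As.
  ring.
have nn1 : (n%:R : R) != 1 by rewrite pnatr_eq1; case: n n2 => [|[]].
have n2' : ((n.+2)%:R : R) != 0 by rewrite pnatr_eq0.
have e1 : ((n.+1)%:R : R) = n%:R + 1 by rewrite -addn1 natrD.
have e2 : ((n.+2)%:R : R) = n%:R + 2 by rewrite -addn2 natrD.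
have e3 : ((n.+3)%:R : R) = n%:R + 3 by rewrite -addn3 natrD.
have nz1 : (1 - n%:R : R) != 0 by rewrite subr_eq0 eq_sym.
have nz2 : (n%:R - 1 : R) != 0 by rewrite subr_eq0.
rewrite e2 in n2'.
split.
  rewrite /Sform.
  have -> : \sum_i \sum_j Fi i j * (D k i j - n%:R * D j i k)
       = (\sum_i \sum_j Fi i j * D k i j) - n%:R * \sum_i \sum_j Fi i j * D j i k.
    rewrite mulr_sumr -sumrB; apply: eq_bigr => i _.
    rewrite mulr_sumr -sumrB; apply: eq_bigr => j _; ring.
  rewrite T Q e2; field; by rewrite n2' nz1.
rewrite /Cform.
have -> : \sum_i \sum_j Fi i j * ((n.+3)%:R * D k i j - 2 * (n.+1)%:R * D j i k)
     = (n.+3)%:R * (\sum_i \sum_j Fi i j * D k i j)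
       - 2 * (n.+1)%:R * \sum_i \sum_j Fi i j * D j i k.
  rewrite !mulr_sumr -sumrB; apply: eq_bigr => i _.
  rewrite !mulr_sumr -sumrB; apply: eq_bigr => j _; ring.
rewrite T Q e1 e2 e3; field; by rewrite n2' nz2.
Qed.
End Alg2.
Section An.
Variables (R : realType) (n : nat).
Local Notation V := 'rV[R]_n.

Lemma diff_bsum (I : Type) (r : seq I) (P : pred I) (f : I -> V -> R) p :
  (forall i, P i -> differentiable (f i) p) ->
  differentiable (fun q => \sum_(i <- r | P i) f i q) p.
Proof.
move=> h; elim: r => [|a r ih].
  by under eq_fun do rewrite big_nil; exact: differentiable_cst.
under eq_fun do rewrite big_cons.
case Pa: (P a) => //.
exact: (differentiableD (h a Pa) ih).
Qed.

Lemma diff_bprod (I : Type) (r : seq I) (P : pred I) (f : I -> V -> R) p :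
  (forall i, P i -> differentiable (f i) p) ->
  differentiable (fun q => \prod_(i <- r | P i) f i q) p.
Proof.
move=> h; elim: r => [|a r ih].
  by under eq_fun do rewrite big_nil; exact: differentiable_cst.
under eq_fun do rewrite big_cons.
case Pa: (P a) => //.
exact: (differentiableM (h a Pa) ih).
Qed.

Lemma diff_det m (G : V -> 'M[R]_m) p :
  (forall i j, differentiable (fun q => G q i j) p) ->
  differentiable (fun q => \det (G q)) p.
Proof.
move=> h; rewrite /determinant.
apply: diff_bsum => s _.
apply: differentiableM; first exact: differentiable_cst.
by apply: diff_bprod => i _.
Qed.

Lemma diff_adj m (G : V -> 'M[R]_m) p i j :
  (forall i j, differentiable (fun q => G q i j) p) ->
  differentiable (fun q => \adj (G q) i j) p.
Proof.
move=> h; under eq_fun do rewrite mxE /cofactor.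
apply: differentiableM; first exact: differentiable_cst.
apply: diff_det => a b.
by under eq_fun do rewrite !mxE.
Qed.

Definition Finv m (G : V -> 'M[R]_m) q := (\det (G q))^-1 *: \adj (G q).

Lemma diff_Finv m (G : V -> 'M[R]_m) p i j :
  (forall i j, differentiable (fun q => G q i j) p) -> \det (G p) != 0 ->
  differentiable (fun q => Finv G q i j) p.
Proof.
move=> h d0; rewrite /Finv; under eq_fun do rewrite mxE.
apply: differentiableM; last exact: diff_adj.
exact: differentiableV (diff_det h) d0.
Qed.

Lemma invmx_Finv m (G : V -> 'M[R]_m) p : G p \in unitmx -> invmx (G p) = Finv G p.
Proof. by move=> u; rewrite /invmx u. Qed.
End An.
Section Pd.
Variables (R : realType) (n : nat).
Local Notation V := 'rV[R]_n.
Implicit Types (f g : V -> R) (p : V).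

Lemma pdE k f p : differentiable f p -> pd k f p = 'd f p (ebasis R k).
Proof. by move=> d; rewrite /pd deriveE. Qed.

Lemma pd_mul k f g p : differentiable f p -> differentiable g p ->
  pd k (fun q => f q * g q) p = pd k f p * g p + f p * pd k g p.
Proof.
move=> df dg; rewrite /pd.
rewrite (_ : (fun q => f q * g q) = f * g) //.
rewrite deriveM; try exact: diff_derivable.
by rewrite /GRing.scale /= addrC mulrC.
Qed.

Lemma pd_add k f g p : differentiable f p -> differentiable g p ->
  pd k (fun q => f q + g q) p = pd k f p + pd k g p.
Proof.
move=> df dg; rewrite /pd (_ : (fun q => f q + g q) = f + g) //.
by rewrite deriveD //; exact: diff_derivable.
Qed.

Lemma pd_cst k (c : R) p : pd k (fun _ => c) p = 0.
Proof. exact: derive_cst. Qed.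

Lemma pd_coord k j p : pd k (fun q : V => q 0 j) p = (k == j)%:R.
Proof.
have := @derive_mx R V 1 n id p (ebasis R k) (@derivable_id _ _ _ _).
rewrite derive_id => /matrixP /(_ 0 j); rewrite !mxE /= => h.
by rewrite /pd -h eq_sym.
Qed.

Lemma pd_bsum k (I : Type) (r : seq I) (P : pred I) (f : I -> V -> R) p :
  (forall i, P i -> differentiable (f i) p) ->
  pd k (fun q => \sum_(i <- r | P i) f i q) p = \sum_(i <- r | P i) pd k (f i) p.
Proof.
move=> h; elim: r => [|a r ih].
  by under eq_fun do rewrite big_nil; rewrite big_nil pd_cst.
under eq_fun do rewrite big_cons.
rewrite big_cons; case Pa: (P a) => //.
by rewrite pd_add // ?ih //; [exact: h | exact: diff_bsum].
Qed.

Lemma diff_coord j p : differentiable (fun q : V => q 0 j) p.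
Proof. exact: differentiable_coord. Qed.

Definition pdm k m1 m2 (G : V -> 'M[R]_(m1, m2)) p :=
  \matrix_(i, j) pd k (fun q => G q i j) p.

Definition dent m1 m2 (G : V -> 'M[R]_(m1, m2)) p :=
  forall i j, differentiable (fun q => G q i j) p.

Lemma dent_mul m1 m2 m3 (G1 : V -> 'M[R]_(m1, m2)) (G2 : V -> 'M[R]_(m2, m3)) p :
  dent G1 p -> dent G2 p -> dent (fun q => G1 q *m G2 q) p.
Proof.
move=> h1 h2 i j; under eq_fun do rewrite mxE.
by apply: diff_bsum => l _; apply: differentiableM.
Qed.

Lemma pdm_mul k m1 m2 m3 (G1 : V -> 'M[R]_(m1, m2)) (G2 : V -> 'M[R]_(m2, m3)) p :
  dent G1 p -> dent G2 p ->
  pdm k (fun q => G1 q *m G2 q) p = pdm k G1 p *m G2 p + G1 p *m pdm k G2 p.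
Proof.
move=> h1 h2; apply/matrixP => i j; rewrite !mxE.
under eq_fun do rewrite mxE.
rewrite pd_bsum; last by move=> l _; apply: differentiableM.
rewrite -big_split; apply: eq_bigr => l _.
by rewrite pd_mul // !mxE.
Qed.

Lemma dent_tr m1 m2 (G : V -> 'M[R]_(m1, m2)) p :
  dent G p -> dent (fun q => (G q)^T) p.
Proof. by move=> h i j; under eq_fun do rewrite mxE. Qed.

Lemma pdm_tr k m1 m2 (G : V -> 'M[R]_(m1, m2)) p :
  pdm k (fun q => (G q)^T) p = (pdm k G p)^T.
Proof.
apply/matrixP => i j; rewrite !mxE.
by under eq_fun do rewrite mxE.
Qed.
End Pd.
Section Line.
Variables (R : realType) (n : nat).
Local Notation V := 'rV[R]_n.

Lemma dlin_partial (f : V -> R) x (q : V) : differentiable f x ->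
  'd f x q = \sum_j q 0 j * pd j f x.
Proof.
move=> df; rewrite {1}(row_sum_delta q) linear_sum; apply: eq_bigr => j _.
by rewrite linearZ pdE.
Qed.

Lemma line_derive (f : V -> R) (p0 q : V) (t : R) :
  differentiable f (p0 + t *: q) ->
  derivable (fun s : R => f (p0 + s *: q)) t 1 /\
  'D_1 (fun s : R => f (p0 + s *: q)) t = \sum_j q 0 j * pd j f (p0 + t *: q).
Proof.
move=> df.
pose l : R -> V := cst p0 + ( *:%R ^~ q : R -> V).
have dl : is_diff t l (0 + ( *:%R ^~ q)) by exact: is_diffD.
have e : (fun s : R => f (p0 + s *: q)) = f \o l by [].

have dfl : differentiable (f \o l) t by apply: differentiable_comp.
rewrite e; split; first exact: diff_derivable.
rewrite deriveE // diff_comp // diff_val /= add0r scale1r.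
exact: dlin_partial.
Qed.
End Line.
Section ODE.
Variable (R : realType).

Lemma dlinR (c x : R) : derivable (fun y : R => c * y) x 1 /\ 'D_1 (fun y : R => c * y) x = c.
Proof.
have e : (fun y : R => c * y) = (cst c) * id by [].
rewrite e; split; first by apply: derivableM; [exact: derivable_cst| exact: derivable_id].
by rewrite deriveM ?derive_cst ?derive_id /GRing.scale /=; [ring|exact: derivable_cst|exact: derivable_id].
Qed.

Lemma dexpc (c x : R) : derivable (fun y : R => expR (c * y)) x 1 /\
  'D_1 (fun y : R => expR (c * y)) x = c * expR (c * x).
Proof.
have [d1 d2] := dlinR c x.
have e : (fun y : R => expR (c * y)) = expR \o (fun y : R => c * y) by [].
rewrite e; split.
  apply/derivable1_diffP; apply: differentiable_comp; first exact/derivable1_diffP.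
  exact/derivable1_diffP/derivable_expR.
rewrite -derive1E derive1_comp //.
have E1 : 'D_1 expR (c * x) = expR (c * x) :> R by rewrite derive_val.
by rewrite !derive1E d2 E1 mulrC.
Qed.

Lemma ode0 (g a : R -> R) : g 0 = 0 ->
  (forall t, 0 <= t <= 1 -> derivable g t 1 /\ 'D_1 g t = a t * g t) ->
  {within `[0, 1], continuous a} ->
  forall t, 0 <= t <= 1 -> g t = 0.
Proof.
move=> g0 hg ca.
have [c c01 cmax] := EVT_max ler01 ca.
set A := a c in cmax.
pose h := fun x : R => g x ^+ 2 * expR (- (2 * A) * x).
move=> t /andP[t0 t1].
have [->|tpos] := eqVneq t 0; first exact: g0.
have tgt0 : 0 < t by rewrite lt_neqAle eq_sym tpos.
have hder : forall x, 0 <= x <= 1 -> derivable h x 1 /\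
    'D_1 h x = 2 * g x ^+ 2 * expR (- (2 * A) * x) * (a x - A).
  move=> x /andP[x0 x1]; have [dg Dg] := hg x (introT andP (conj x0 x1)).
  have [de De] := dexpc (- (2 * A)) x.
  have e : h = (g ^+ 2) * (fun y => expR (- (2 * A) * y)) by [].
  rewrite e; split; first by apply: derivableM => //; exact: derivableX.
  rewrite deriveM //; last exact: derivableX.
  rewrite deriveX // De Dg /GRing.scale /= exprfctE /=; ring.
have hin : forall x, x \in `[0, t] -> 0 <= x <= 1.
  move=> x; rewrite in_itv /= => /andP[x0 xt]; rewrite x0 /=.
  exact: le_trans xt t1.
have hcont : {within `[0, t], continuous h}.
  apply: derivable_within_continuous => x /hin xi; exact: (hder x xi).1.
have hd : forall x, x \in `]0, t[ -> is_derive x 1 h ('D_1 h x).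
  move=> x xI; apply: derivableP.
  have xi : 0 <= x <= 1.
    by apply: hin; move: xI; rewrite !in_itv /= => /andP[? ?]; apply/andP; split; apply: ltW.
  exact: (hder x xi).1.
have [d dI heq] := MVT tgt0 hd hcont.
have d01 : 0 <= d <= 1.
  by apply: hin; move: dI; rewrite !in_itv /= => /andP[? ?]; apply/andP; split; apply: ltW.
have h0 : h 0 = 0 by rewrite /h g0 expr0n /= mul0r.
rewrite h0 subr0 (hder d d01).2 in heq.
have ad : a d - A <= 0.
  rewrite subr_le0; apply: cmax; move: d01 => /andP[? ?]; by rewrite in_itv /=; apply/andP.
have ht : h t <= 0.
  rewrite heq subr0; apply: mulr_le0_ge0; last exact: ltW.
  apply: mulr_ge0_le0 => //; apply: mulr_ge0; last exact: expR_ge0.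
  by apply: mulr_ge0 => //; exact: sqr_ge0.
have ht0 : 0 <= h t by apply: mulr_ge0; [exact: sqr_ge0|exact: expR_ge0].
have : h t = 0 by apply/eqP; rewrite eq_le ht ht0.
rewrite /h => /eqP; rewrite mulf_eq0 expR_eq0 orbF sqrf_eq0 => /eqP //.
Qed.
End ODE.
Section Common.
Variables (R : realType) (n : nat) (F : 'rV[R]_n -> 'M[R]_n) (U : set 'rV[R]_n).
Hypothesis hn : (2 <= n)%N.
Hypothesis hU : open U.
Hypothesis hsmooth : forall i j : 'I_n, smooth_on U (fent F i j).
Hypothesis hsym : forall p, U p -> (F p)^T = F p.
Hypothesis hnondeg : forall p, U p -> F p \in unitmx.
Local Notation V := 'rV[R]_n.

Lemma dF p : U p -> dent F p.
Proof. by move=> Up i j; exact: (hsmooth i j [::] Up). Qed.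

Lemma dD p k i j : U p -> differentiable (pd k (fent F i j)) p.
Proof. by move=> Up; exact: (hsmooth i j [:: k] Up). Qed.

Lemma detF0 p : U p -> \det (F p) != 0.
Proof. by move=> /hnondeg; rewrite unitmxE unitfE. Qed.

Definition sfun (k : 'I_n) (p : V) : R :=
  ((n.+2)%:R * (1 - n%:R))^-1 *
  \sum_(i < n) \sum_(j < n)
     Finv F p i j * (pd k (fent F i j) p - n%:R * pd j (fent F i k) p).

Definition cfun (k : 'I_n) (p : V) : R :=
  ((n.+2)%:R * (n%:R - 1))^-1 *
  \sum_(i < n) \sum_(j < n)
     Finv F p i j * ((n.+3)%:R * pd k (fent F i j) p
                        - 2 * (n.+1)%:R * pd j (fent F i k) p).

Lemma sfunE k p : U p -> s_coef F k p = sfun k p.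
Proof. by move=> Up; rewrite /s_coef /sfun invmx_Finv //; exact: hnondeg. Qed.

Lemma cfunE k p : U p -> c_coef F k p = cfun k p.
Proof. by move=> Up; rewrite /c_coef /cfun invmx_Finv //; exact: hnondeg. Qed.

Lemma diff_sfun k p : U p -> differentiable (sfun k) p.
Proof.
move=> Up; rewrite /sfun.
apply: differentiableM; first exact: differentiable_cst.
apply: diff_bsum => i _; apply: diff_bsum => j _.
apply: differentiableM; first by apply: diff_Finv; [exact: dF|exact: detF0].
apply: differentiableD; first exact: dD.
apply: differentiableN; apply: differentiableM; first exact: differentiable_cst.
exact: dD.
Qed.

Lemma diff_cfun k p : U p -> differentiable (cfun k) p.
Proof.
move=> Up; rewrite /cfun.
apply: differentiableM; first exact: differentiable_cst.
apply: diff_bsum => i _; apply: diff_bsum => j _.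
apply: differentiableM; first by apply: diff_Finv; [exact: dF|exact: detF0].
apply: differentiableD.
  by apply: differentiableM; [exact: differentiable_cst|exact: dD].
apply: differentiableN; apply: differentiableM; first exact: differentiable_cst.
exact: dD.
Qed.

Lemma s_coefE p k : s_coef F k p = Sform (F p) (fun k i j => pd k (fent F i j) p) k.
Proof. by []. Qed.
Lemma c_coefE p k : c_coef F k p = Cform (F p) (fun k i j => pd k (fent F i j) p) k.
Proof. by []. Qed.
End Common.
Section Mlemmas.
Variables (R : realType) (n : nat).
Local Notation V := 'rV[R]_n.

Lemma dentM (C : 'M[R]_n) (b : 'cV[R]_n) q : dent (fun q : V => C + b *m q) q.
Proof.
move=> i j; under eq_fun do rewrite !mxE big_ord1.
apply: differentiableD; first exact: differentiable_cst.
apply: differentiableM; first exact: differentiable_cst.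
exact: diff_coord.
Qed.

Lemma pdmM (C : 'M[R]_n) (b : 'cV[R]_n) k p :
  pdm k (fun q : V => C + b *m q) p = b *m ebasis R k.
Proof.
apply/matrixP => i j; rewrite !mxE big_ord1.
under eq_fun do rewrite !mxE big_ord1.
rewrite pd_add; first last.
- by apply: differentiableM; [exact: differentiable_cst| exact: diff_coord].
- exact: differentiable_cst.
rewrite pd_cst add0r pd_mul; [|exact: differentiable_cst| exact: diff_coord].
by rewrite pd_cst pd_coord /ebasis mxE eqxx /= mul0r add0r eq_sym.
Qed.
End Mlemmas.
Section OnlyIf.
Variables (R : realType) (n : nat) (F : 'rV[R]_n -> 'M[R]_n) (U : set 'rV[R]_n).
Hypothesis hn : (2 <= n)%N.
Hypothesis hsmooth : forall i j : 'I_n, smooth_on U (fent F i j).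
Hypothesis hsym : forall p, U p -> (F p)^T = F p.
Hypothesis hnondeg : forall p, U p -> F p \in unitmx.
Local Notation V := 'rV[R]_n.

Lemma nz_entry (K : 'M[R]_n) : K != 0 -> exists a0 b0, K a0 b0 != 0.
Proof.
move=> K0; case: (pickP (fun ab : 'I_n * 'I_n => K ab.1 ab.2 != 0)) => [[a0 b0] h|h].
  by exists a0, b0.
move/eqP: K0; case; apply/matrixP => i j; rewrite mxE.
by have := h (i, j) => /= /negbFE/eqP.
Qed.

Lemma unit_nz (A : 'M[R]_n) : (0 < n)%N -> A \in unitmx -> A != 0.
Proof.
move=> n0 u; apply/eqP => A0; have := mulmxV u; rewrite A0 mul0mx.
move/matrixP => /(_ (Ordinal n0) (Ordinal n0)); rewrite !mxE eqxx /=.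
by move/eqP; rewrite eq_sym oner_eq0.
Qed.

Lemma cancel_MT (M X Y : 'M[R]_n) : M \in unitmx ->
  M *m X *m M^T = M *m Y *m M^T -> X = Y.
Proof.
move=> u h; have uT : M^T \in unitmx by rewrite unitmx_tr.
have := congr1 (fun Z => invmx M *m Z *m invmx M^T) h => /=.
by rewrite !mulmxA mulVmx // !mul1mx !mulmxK.
Qed.

Lemma expand_id (Mp Fp D : 'M[R]_n) (w : 'cV[R]_n) (e : 'rV[R]_n) (g : R) :
  Mp \in unitmx ->
  (Mp *m w *m e *m Fp + Mp *m D) *m Mp^T + Mp *m Fp *m (Mp *m w *m e)^T
    = g *: (Mp *m Fp *m Mp^T) ->
  w *m (e *m Fp) + D + Fp *m (e^T *m w^T) = g *: Fp.
Proof.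
move=> u E; apply: (cancel_MT u).
rewrite -scalemxAr -scalemxAl -[RHS]E.
by rewrite !mulmxDr !mulmxDl !trmx_mul !mulmxA.
Qed.

Lemma onlyif_point (V0 : set V) (C : 'M[R]_n) (b : 'cV[R]_n) (K : 'M[R]_n)
    (lam : V -> R) :
  open V0 -> V0 `<=` U ->
  (forall p, V0 p -> (C + b *m p) \in unitmx /\ Ftrans F C b p = lam p *: K) ->
  forall p, V0 p -> (forall i j k, a_coef F i j k p = 0) /\
    (forall k, s_coef F k p = - (invmx (C + b *m p) *m b) k 0).
Proof.
move=> oV sVU hlin p Vp.
have Up := sVU p Vp.
pose M := fun q : V => C + b *m q.
pose G := fun q : V => M q *m F q *m (M q)^T.
have uM q : V0 q -> M q \in unitmx by move=> /hlin [].
have uG q : V0 q -> G q \in unitmx.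
  move=> Vq; rewrite /G !unitmx_mul uM // unitmx_tr uM // hnondeg //; exact: sVU.
have n0 : (0 < n)%N by apply: leq_trans hn.
have GK q : V0 q -> G q = (lam q / \det (M q)) *: K.
  move=> Vq; have [u e] := hlin q Vq.
  have d0 : \det (M q) != 0 by rewrite -unitfE -unitmxE.
  rewrite /Ftrans in e.
  by rewrite mulrC -scalerA -e scalerA mulVf // scale1r.
have K0 : K != 0.
  apply/eqP => K0; have := unit_nz n0 (uG p Vp).
  by rewrite GK // K0 scaler0 eqxx.
have [a0 [b0 Kab]] := nz_entry K0.
pose phi := fun q => G q a0 b0 / K a0 b0.
have Gphi q : V0 q -> G q = phi q *: K.
  by move=> Vq; rewrite /phi GK // mxE mulfK.
have dG : dent G p.
  apply: dent_mul; first by apply: dent_mul; [exact: dentM| exact: dF].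
  by apply: dent_tr; exact: dentM.
have Vn : \forall q \near p, V0 q by apply: open_nbhs_nbhs.
have dphi : differentiable phi p.
  by apply: differentiableM; [exact: dG| exact: differentiable_cst].
have phi0 : phi p != 0.
  apply/eqP=> e; have := unit_nz n0 (uG p Vp).
  by rewrite Gphi // e scale0r eqxx.
pose gam := fun k => pd k phi p / phi p.
have pdG k : pdm k G p = gam k *: G p.
  apply/matrixP => x y; rewrite [LHS]mxE [RHS]mxE.
  have -> : pd k (fun q => G q x y) p = pd k (fun q => phi q * K x y) p.
    by apply: near_eq_derive; apply: filterS Vn => q Vq; rewrite Gphi // mxE.
  rewrite pd_mul // pd_cst mulr0 addr0 Gphi // mxE /gam.
  by field.
have uMp : M p \in unitmx by exact: uM.
set w := invmx (M p) *m b.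
have bw : b = M p *m w by rewrite /w mulKVmx.
have hD k i j : pd k (fent F i j) p =
    gam k * F p i j + (- w i 0) * F p k j + (- w j 0) * F p k i.
  set e := ebasis R k.
  have E2 : pdm k G p = pdm k (fun q => M q *m F q) p *m (M p)^T
      + (M p *m F p) *m pdm k (fun q => (M q)^T) p.
    apply: pdm_mul; first by apply: dent_mul; [exact: dentM| exact: dF].
    by apply: dent_tr; exact: dentM.
  have E3 : pdm k (fun q => M q *m F q) p = pdm k M p *m F p + M p *m pdm k F p.
    by apply: pdm_mul; [exact: dentM| exact: dF].
  have E := pdG k.
  rewrite E2 E3 pdm_tr /M !pdmM -/(M p) -/e in E.
  set D := pdm k F p in E.
  rewrite [in X in X = _]bw in E.
  have X := expand_id uMp E.
  rewrite [F p *m _]mulmxA /e /ebasis trmx_delta -rowE -colE in X.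
  move/matrixP: X => /(_ i j); rewrite !mxE !big_ord1 !mxE.
  have -> : F p i k = F p k i by rewrite -{1}(hsym Up) mxE.
  move=> X; rewrite /fent; apply/eqP; rewrite -(eqP (introT eqP X)).
  apply/eqP; ring.
have alg := @alg_main R n (F p) (fun k i j => pd k (fent F i j) p) gam
   (fun i => - w i 0) hn (hsym Up) (hnondeg Up) hD.
have hs k : s_coef F k p = - w k 0 by rewrite s_coefE (alg k).1.
have hc k : c_coef F k p = gam k - 2 * (- w k 0) by rewrite c_coefE (alg k).2.
split; last exact: hs.
move=> i j k; rewrite /a_coef !hs hc hD; ring.
Qed.
End OnlyIf.
Section OnlyIf2.
Variables (R : realType) (n : nat) (F : 'rV[R]_n -> 'M[R]_n) (U : set 'rV[R]_n).
Hypothesis hn : (2 <= n)%N.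
Hypothesis hsmooth : forall i j : 'I_n, smooth_on U (fent F i j).
Hypothesis hsym : forall p, U p -> (F p)^T = F p.
Hypothesis hnondeg : forall p, U p -> F p \in unitmx.
Local Notation V := 'rV[R]_n.

Lemma mul_cv1 (b : 'cV[R]_n) (X : 'M[R]_1) : b *m X = X 0 0 *: b.
Proof.
apply/matrixP => i j; rewrite !mxE big_ord1 (ord1 j) mulrC.
by [].
Qed.

Definition den (p0 : V) (beta : 'cV[R]_n) (q : V) : R :=
  1 + \sum_l (q 0 l - p0 0 l) * beta l 0.

Lemma diff_den p0 beta q : differentiable (den p0 beta) q.
Proof.
rewrite /den; apply: differentiableD; first exact: differentiable_cst.
apply: diff_bsum => l _; apply: differentiableM; last exact: differentiable_cst.
by apply: differentiableB; [exact: diff_coord| exact: differentiable_cst].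
Qed.

Lemma pd_den p0 beta j q : pd j (den p0 beta) q = beta j 0.
Proof.
rewrite /den pd_add; [|exact: differentiable_cst|].
  rewrite pd_cst add0r pd_bsum; last first.
    move=> l _; apply: differentiableM; last exact: differentiable_cst.
    by apply: differentiableB; [exact: diff_coord| exact: differentiable_cst].
  rewrite -(sum_dr (fun l => beta l 0) j); apply: eq_bigr => l _.
  rewrite pd_mul; [|by apply: differentiableB; [exact: diff_coord| exact: differentiable_cst]
                   |exact: differentiable_cst].
  rewrite pd_cst mulr0 addr0.
  rewrite (_ : (fun q : V => q 0 l - p0 0 l) = (fun q : V => q 0 l + (fun _ => - p0 0 l) q)) //.
  rewrite pd_add; [|exact: diff_coord|exact: differentiable_cst].
  by rewrite pd_coord pd_cst addr0 mulrC.
apply: diff_bsum => l _; apply: differentiableM; last exact: differentiable_cst.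
by apply: differentiableB; [exact: diff_coord| exact: differentiable_cst].
Qed.

Lemma onlyif_flat (V0 : set V) (C : 'M[R]_n) (b : 'cV[R]_n) (K : 'M[R]_n)
    (lam : V -> R) :
  open V0 -> V0 `<=` U ->
  (forall p, V0 p -> (C + b *m p) \in unitmx /\ Ftrans F C b p = lam p *: K) ->
  forall p0, V0 p0 -> forall i j,
    pd j (s_coef F i) p0 - s_coef F i p0 * s_coef F j p0 = 0.
Proof.
move=> oV sVU hlin p0 Vp0 i j.
pose M := fun q : V => C + b *m q.
have uM q : V0 q -> M q \in unitmx by move=> /hlin [].
pose beta := invmx (M p0) *m b.
have hs q k : V0 q -> s_coef F k q = - (invmx (M q) *m b) k 0.
  by move=> Vq; have [_ ->] := onlyif_point hn hsmooth hsym hnondeg oV sVU hlin Vq.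
have wq q : V0 q -> invmx (M q) *m b = (den p0 beta q)^-1 *: beta.
  move=> Vq.
  have Mb : M q *m beta = den p0 beta q *: b.
    have -> : M q = M p0 + b *m (q - p0) by rewrite /M mulmxBr -addrA [b *m p0 + _]addrC subrK.
    rewrite mulmxDl -mulmxA mul_cv1 /beta mulKVmx; last exact: uM.
    rewrite /den scalerDl scale1r; congr (_ + _); congr (_ *: _).
    by rewrite !mxE; apply: eq_bigr => l _; rewrite !mxE.
  have d0 : den p0 beta q != 0.
    apply/eqP => d0; move: Mb; rewrite d0 scale0r => Mb.
    have b0 : beta = 0 by rewrite -(mulKmx (uM q Vq) beta) Mb mulmx0.
    by move: d0; rewrite /den b0 big1 ?addr0 => [/eqP|l _]; rewrite ?oner_eq0 // mxE mulr0.
  by rewrite -[in LHS](scalerK d0 b) -Mb -scalemxAr mulKmx //; exact: uM.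
have Vn : \forall q \near p0, V0 q by apply: open_nbhs_nbhs.
have den0 : den p0 beta p0 = 1.
  by rewrite /den big1 ?addr0 // => l _; rewrite subrr mul0r.
have si q k : V0 q -> s_coef F k q = - beta k 0 * (den p0 beta q)^-1.
  by move=> Vq; rewrite hs // wq // mxE mulrC mulNr.
have -> : pd j (s_coef F i) p0 = pd j (fun q => - beta i 0 * (den p0 beta q)^-1) p0.
  by apply: near_eq_derive; apply: filterS Vn => q Vq; rewrite si.
rewrite pd_mul; [|exact: differentiable_cst|]; last first.
  by apply: differentiableV; [exact: diff_den| rewrite den0 oner_eq0].
rewrite pd_cst mul0r add0r /pd deriveV; last exact: diff_derivable (diff_den _ _ _).
  rewrite -/(pd j _ _) pd_den !si // den0 invr1 expr1n invr1 /GRing.scale /=; ring.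
by rewrite den0 oner_eq0.
Qed.
End OnlyIf2.
Section Seg.
Variables (R : realType) (n : nat).
Local Notation V := 'rV[R]_n.

Lemma ball_seg (p0 p : V) (r : R) t : ball p0 r p -> 0 <= t <= 1 ->
  ball p0 r (p0 + t *: (p - p0)).
Proof.
rewrite -!ball_normE /ball_ /= => h /andP[t0 t1].
rewrite opprD addrA subrr add0r normrN normrZ (ger0_norm t0).
apply: le_lt_trans h; rewrite distrC.
have := normr_ge0 (p0 - p); nra.
Qed.

Lemma seg_ode (Gf Af : V -> R) (p0 q : V) :
  Gf p0 = 0 ->
  (forall t, 0 <= t <= 1 ->
    differentiable Gf (p0 + t *: (q - p0)) /\ differentiable Af (p0 + t *: (q - p0)) /\
    \sum_j (q - p0) 0 j * pd j Gf (p0 + t *: (q - p0))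
       = Af (p0 + t *: (q - p0)) * Gf (p0 + t *: (q - p0))) ->
  forall t, 0 <= t <= 1 -> Gf (p0 + t *: (q - p0)) = 0.
Proof.
move=> G0 h.
apply: (@ode0 R (fun t => Gf (p0 + t *: (q - p0))) (fun t => Af (p0 + t *: (q - p0)))).
- by rewrite scale0r addr0.
- move=> t tI; have [dG [dA e]] := h t tI; have [d1 d2] := line_derive dG.
  by split => //; rewrite d2 e.
- apply: continuous_in_subspaceT => t; rewrite inE /= in_itv /= => tI.
  have [_ [dA _]] := h t tI; have [d1 _] := line_derive dA.
  exact/differentiable_continuous/derivable1_diffP.
Qed.
End Seg.
Section IfDir.
Variables (R : realType) (n : nat) (F : 'rV[R]_n -> 'M[R]_n) (U : set 'rV[R]_n).
Hypothesis hn : (2 <= n)%N.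
Hypothesis hU : open U.
Hypothesis hsmooth : forall i j : 'I_n, smooth_on U (fent F i j).
Hypothesis hsym : forall p, U p -> (F p)^T = F p.
Hypothesis hnondeg : forall p, U p -> F p \in unitmx.
Hypothesis ha : forall (i j k : 'I_n) p, U p -> a_coef F i j k p = 0.
Hypothesis hf : forall (i j : 'I_n) p, U p ->
  pd j (s_coef F i) p - s_coef F i p * s_coef F j p = 0.
Local Notation V := 'rV[R]_n.
Variables (p0 : V) (r : R).
Hypothesis r0 : 0 < r.
Hypothesis hball : ball p0 r `<=` U.

Lemma pd_sfun i j q : U q -> pd j (sfun F i) q = sfun F i q * sfun F j q.
Proof.
move=> Uq.
have Un : \forall x \near q, U x by apply: open_nbhs_nbhs.
have -> : pd j (sfun F i) q = pd j (s_coef F i) q.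
  by apply: near_eq_derive; apply: filterS Un => x Ux; rewrite (sfunE hnondeg).
by apply/eqP; rewrite -subr_eq0 -!(sfunE hnondeg) //; apply/eqP; exact: hf.
Qed.

Definition s0 i := s_coef F i p0.
Definition bb : 'cV[R]_n := \col_i (- s0 i).
Definition psi := den p0 bb.
Definition uf i q := sfun F i q * psi q + (fun _ => - s0 i) q.

Lemma diff_uf i q : U q -> differentiable (uf i) q.
Proof.
move=> Uq; apply: differentiableD; last exact: differentiable_cst.
apply: differentiableM; [exact: diff_sfun| exact: diff_den].
Qed.

Lemma pd_uf i j q : U q -> pd j (uf i) q = sfun F i q * uf j q.
Proof.
move=> Uq; rewrite /uf pd_add; [|apply: differentiableM; [exact: diff_sfun| exact: diff_den]
  | exact: differentiable_cst].
rewrite pd_cst addr0 pd_mul; [|exact: diff_sfun| exact: diff_den].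
by rewrite pd_sfun // /psi pd_den /bb mxE; ring.
Qed.

Lemma uf_zero q : ball p0 r q -> forall i, uf i q = 0.
Proof.
move=> bq.
have seg t : 0 <= t <= 1 -> U (p0 + t *: (q - p0)) by move=> tI; apply: hball; exact: ball_seg.
have Up0 : U p0 by apply: hball; exact: ballxx.
have u0 i : uf i p0 = 0.
  rewrite /uf /psi /den big1 ?addr0 ?mulr1 => [|l _]; last by rewrite subrr mul0r.
  by rewrite -(sfunE hnondeg) // /s0 subrr.
pose d := q - p0.
pose Gf := fun x => \sum_i d 0 i * uf i x.
pose Af := fun x => \sum_i d 0 i * sfun F i x.
have dGf x : U x -> differentiable Gf x.
  move=> Ux; apply: diff_bsum => i _; apply: differentiableM; [exact: differentiable_cst|exact: diff_uf].
have pdGf j x : U x -> pd j Gf x = Af x * uf j x.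
  move=> Ux; rewrite pd_bsum; last by move=> i _; apply: differentiableM;
      [exact: differentiable_cst|exact: diff_uf].
  rewrite /Af mulr_suml; apply: eq_bigr => i _.
  rewrite pd_mul; [|exact: differentiable_cst|exact: diff_uf].
  by rewrite pd_cst mul0r add0r pd_uf // mulrA.
have G0 t : 0 <= t <= 1 -> Gf (p0 + t *: d) = 0.
  apply: (@seg_ode R n Gf Af p0 q) => [|t' tI].
    by rewrite /Gf big1 // => i _; rewrite u0 mulr0.
  split; first exact: dGf (seg t' tI).
  split.
    rewrite /Af; apply: diff_bsum => i _; apply: differentiableM; [exact: differentiable_cst|].
    exact: diff_sfun (seg t' tI).
  rewrite /Gf mulr_sumr; apply: eq_bigr => j _.
  by rewrite pdGf; [rewrite /d; ring | exact: seg].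
move=> i.
have := @seg_ode R n (uf i) (fun _ => 0) p0 q (u0 i) _ 1.
rewrite scale1r addrCA subrr addr0; apply => //; last by rewrite ler01 lexx.
move=> t tI; split; first exact: diff_uf (seg t tI).
split; first exact: differentiable_cst.
rewrite mul0r.
transitivity (sfun F i (p0 + t *: d) * \sum_j d 0 j * uf j (p0 + t *: d)).
  rewrite mulr_sumr; apply: eq_bigr => j _; rewrite pd_uf; [ring| exact: seg].
by have := G0 t tI; rewrite /Gf => ->; rewrite mulr0.
Qed.
End IfDir.
Section AbsAlg.
Variables (R : realType) (n : nat).

Lemma unit_rank1 (b : 'cV[R]_n) (d : 'rV[R]_n) :
  1 + (d *m b) 0 0 != 0 -> (1%:M + b *m d) \in unitmx.
Proof.
set k := (d *m b) 0 0 => k0.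
set c := (1 + k)^-1.
have XX : b *m d *m (b *m d) = k *: (b *m d).
  by rewrite mulmxA -(mulmxA b d b) mul_cv1 scalemxAl.
suff E : (1%:M + b *m d) *m (1%:M - c *: (b *m d)) = 1%:M by case: (mulmx1_unit E).
rewrite mulmxBr mulmx1 -scalemxAr mulmxDl mul1mx XX.
rewrite -{2}[b *m d]scale1r -scalerDl -[X in 1%:M + _ - X]scale1r scalerA.
by rewrite scalerA mul1r /c mulVf // scale1r addrK.
Qed.

Lemma expand_id2 (Mq Fq D : 'M[R]_n) (s b : 'cV[R]_n) (e : 'rV[R]_n) (g : R) :
  Mq *m s = - b ->
  D = g *: Fq + s *m (e *m Fq) + Fq *m (e^T *m s^T) ->
  (b *m e *m Fq + Mq *m D) *m Mq^T + Mq *m Fq *m (b *m e)^T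
    = g *: (Mq *m Fq *m Mq^T).
Proof.
move=> Ms ->.
have -> : b = - (Mq *m s) by rewrite Ms opprK.
rewrite !mulmxDr !mulmxDl !trmx_mul !mulNmx !mulmxA.
rewrite (linearN (@trmx _ _ _)) /= trmx_mul mulmxN !mulmxA -scalemxAr -scalemxAl.
by rewrite -addrA addrK addrC addrK.
Qed.

End AbsAlg.
Section IfDir2.
Variables (R : realType) (n : nat) (F : 'rV[R]_n -> 'M[R]_n) (U : set 'rV[R]_n).
Hypothesis hn : (2 <= n)%N.
Hypothesis hU : open U.
Hypothesis hsmooth : forall i j : 'I_n, smooth_on U (fent F i j).
Hypothesis hsym : forall p, U p -> (F p)^T = F p.
Hypothesis hnondeg : forall p, U p -> F p \in unitmx.
Hypothesis ha : forall (i j k : 'I_n) p, U p -> a_coef F i j k p = 0.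
Hypothesis hf : forall (i j : 'I_n) p, U p ->
  pd j (s_coef F i) p - s_coef F i p * s_coef F j p = 0.
Local Notation V := 'rV[R]_n.
Variables (p0 : V) (r : R).
Hypothesis r0 : 0 < r.
Hypothesis hball : ball p0 r `<=` U.

Lemma sf_rel q i : ball p0 r q -> sfun F i q * psi F p0 q = s0 F p0 i.
Proof.
move=> bq; have := uf_zero hU hsmooth hnondeg hf r0 hball bq i.
by rewrite /uf => /eqP; rewrite addr_eq0 opprK => /eqP.
Qed.

Lemma psi_inv q : ball p0 r q ->
  psi F p0 q * (1 + \sum_l (q 0 l - p0 0 l) * sfun F l q) = 1.
Proof.
move=> bq; rewrite mulrDr mulr1 mulr_sumr.
under eq_bigr => l _ do rewrite mulrCA (mulrC (psi F p0 q)) sf_rel //.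
rewrite /psi /den /bb -addrA -big_split /= big1 ?addr0 // => l _.
by rewrite mxE /s0 mulrN addNr.
Qed.

Lemma psi_nz q : ball p0 r q -> psi F p0 q != 0.
Proof.
move=> bq; apply/eqP => e; have := psi_inv bq; rewrite e mul0r => /eqP.
by rewrite eq_sym oner_eq0.
Qed.

Definition Mf (q : V) := (1%:M - bb F p0 *m p0) + bb F p0 *m q.

Lemma Mf_eq q : Mf q = 1%:M + bb F p0 *m (q - p0).
Proof. by rewrite /Mf mulmxBr addrAC addrA. Qed.

Lemma Mf_unit q : ball p0 r q -> Mf q \in unitmx.
Proof.
move=> bq; rewrite Mf_eq; apply: unit_rank1.
have -> : 1 + ((q - p0) *m bb F p0) 0 0 = psi F p0 q.
  rewrite /psi /den !mxE; congr (_ + _); apply: eq_bigr => l _; by rewrite !mxE.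
exact: psi_nz.
Qed.

Lemma Ms q : ball p0 r q ->
  Mf q *m (\col_i s_coef F i q) = - bb F p0.
Proof.
move=> bq; have Uq := hball bq.
rewrite Mf_eq mulmxDl mul1mx -mulmxA mul_cv1.
have e := psi_inv bq.
set sig := \sum_l _ in e.
have -> : ((q - p0) *m \col_i s_coef F i q) 0 0 = sig.
  rewrite !mxE; apply: eq_bigr => l _; by rewrite !mxE (sfunE hnondeg).
apply/matrixP => i j; rewrite (ord1 j) !mxE opprK -(sf_rel i bq) (sfunE hnondeg) //.
set ps := psi F p0 q in e *; set si := sfun F i q.
have -> : si + sig * - (si * ps) = si * (1 - ps * (1 + sig)) + si * ps by ring.
by rewrite e subrr mulr0 add0r.
Qed.
Definition Gm q := Mf q *m F q *m (Mf q)^T.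
Definition gam k q := c_coef F k q + 2 * s_coef F k q.

Lemma dMf q : dent Mf q.
Proof. exact: dentM. Qed.

Lemma pdmMf k q : pdm k Mf q = bb F p0 *m ebasis R k.
Proof. exact: pdmM. Qed.

Lemma dGm q : U q -> dent Gm q.
Proof.
move=> Uq; apply: dent_mul; first by apply: dent_mul; [exact: dMf| exact: dF].
by apply: dent_tr; exact: dMf.
Qed.

Lemma pdmF q k : U q ->
  pdm k F q = gam k q *: F q + (\col_i s_coef F i q) *m (ebasis R k *m F q)
     + F q *m ((ebasis R k)^T *m (\col_i s_coef F i q)^T).
Proof.
move=> Uq; rewrite [F q *m _]mulmxA /ebasis trmx_delta -rowE -colE.
apply/matrixP => i j; rewrite !mxE !big_ord1 !mxE.
have := ha i j k Uq; rewrite /a_coef /gam /fent.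
have -> : F q i k = F q k i by rewrite -{1}(hsym Uq) mxE.
move=> h; apply/eqP; rewrite -subr_eq0 -h; apply/eqP; ring.
Qed.

Lemma pdmG q k : ball p0 r q -> pdm k Gm q = gam k q *: Gm q.
Proof.
move=> bq; have Uq := hball bq.
have E2 : pdm k Gm q = pdm k (fun z => Mf z *m F z) q *m (Mf q)^T
    + (Mf q *m F q) *m pdm k (fun z => (Mf z)^T) q.
  apply: pdm_mul; first by apply: dent_mul; [exact: dMf| exact: dF].
  by apply: dent_tr; exact: dMf.
have E3 : pdm k (fun z => Mf z *m F z) q = pdm k Mf q *m F q + Mf q *m pdm k F q.
  by apply: pdm_mul; [exact: dMf| exact: dF].
rewrite E2 E3 pdm_tr pdmMf.
apply: expand_id2; first exact: Ms.
exact: pdmF.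
Qed.
Lemma Gm_prop q x y a0 b0 : ball p0 r q ->
  Gm q x y * Gm p0 a0 b0 + Gm q a0 b0 * (- Gm p0 x y) = 0.
Proof.
move=> bq.
pose Gf := fun z => Gm z x y * Gm p0 a0 b0 + Gm z a0 b0 * (- Gm p0 x y).
pose Af := fun z => \sum_j (q - p0) 0 j * (cfun F j z + 2 * sfun F j z).
have := @seg_ode R n Gf Af p0 q _ _ 1.
rewrite scale1r addrCA subrr addr0; apply; last by rewrite ler01 lexx.
  by rewrite /Gf mulrN mulrC addrN.
move=> t tI; have bz := ball_seg bq tI; have Uz := hball bz.
set z := p0 + t *: (q - p0).
have dG := dGm Uz.
split.
  apply: differentiableD; (apply: differentiableM; [exact: dG| exact: differentiable_cst]).
split.
  apply: diff_bsum => j _; apply: differentiableM; first exact: differentiable_cst.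
  apply: differentiableD; first exact: diff_cfun.
  by apply: differentiableM; [exact: differentiable_cst| exact: diff_sfun].
rewrite /Af mulr_suml; apply: eq_bigr => j _.
have pdG a c : pd j (fun w => Gm w a c) z = gam j z * Gm z a c.
  by have := pdmG j bz => /matrixP /(_ a c); rewrite !mxE.
rewrite /Gf pd_add; first last.
- by apply: differentiableM; [exact: dG| exact: differentiable_cst].
- by apply: differentiableM; [exact: dG| exact: differentiable_cst].
rewrite !pd_mul; try exact: dG; try exact: differentiable_cst.
rewrite !pd_cst !pdG /gam (cfunE hnondeg) // (sfunE hnondeg) //; ring.
Qed.

Lemma block_det : \det (block_mx (1%:M - bb F p0 *m p0) (bb F p0) (- p0) (1 : R)%:M
    : 'M[R]_(n + 1)) = 1.
Proof.
have -> : block_mx (1%:M - bb F p0 *m p0) (bb F p0) (- p0) (1 : R)%:M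
    = block_mx 1%:M (bb F p0) 0 1%:M *m block_mx 1%:M 0 (- p0) 1%:M.
  by rewrite mulmx_block !mul1mx !mulmx1 !mul0mx !add0r mulmxN.
by rewrite det_mulmx det_ublock det_lblock !det1 !mulr1.
Qed.

Lemma if_local : exists V0 : set V,
  [/\ open V0, V0 p0, V0 `<=` U & linearizable_on F V0].
Proof.
exists (ball p0 r); split; [exact: ball_open| exact: ballxx| exact: hball|].
have Up0 : U p0 by apply: hball; exact: ballxx.
exists (1%:M - bb F p0 *m p0), (bb F p0), (- p0), 1; split; first exact: block_det.
have MF0 : Mf p0 = 1%:M by rewrite Mf_eq subrr mulmx0 addr0.
set K := Gm p0.
have KF : K = F p0 by rewrite /K /Gm MF0 mul1mx trmx1 mulmx1.
have n0 : (0 < n)%N by apply: leq_trans hn.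
have [a0 [b0 Kab]] := nz_entry (unit_nz n0 (hnondeg Up0) : F p0 != 0).
rewrite -KF in Kab.
exists K, (fun q => \det (Mf q) * (Gm q a0 b0 / K a0 b0)) => q bq.
split; first exact: Mf_unit.
rewrite /Ftrans -/(Mf q) -/(Gm q) -scalerA; congr (_ *: _).
apply/matrixP => x y; rewrite [RHS]mxE.
have := Gm_prop x y a0 b0 bq; rewrite -/K mulrN => /eqP; rewrite subr_eq0 => /eqP h.
by apply: (mulIf Kab); rewrite h; field.
Qed.
End IfDir2.
Theorem proposition1 (R : realType) (n : nat) (hn : (2 <= n)%N)
  (U : set 'rV[R]_n) (F : 'rV[R]_n -> 'M[R]_n)
  (hU : open U)
  (hsmooth : forall i j : 'I_n, smooth_on U (fent F i j))
  (hsym : forall p, U p -> (F p)^T = F p)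
  (hnondeg : forall p, U p -> F p \in unitmx) :
  (forall p0, U p0 -> exists V : set 'rV[R]_n,
       [/\ open V, V p0, V `<=` U & linearizable_on F V]) <->
  ((forall (i j k : 'I_n) p, U p -> a_coef F i j k p = 0) /\
   (forall (i j : 'I_n) p, U p ->
      pd j (s_coef F i) p - s_coef F i p * s_coef F j p = 0)).
Proof.
split.
  move=> hlin; split.
    move=> i j k p Up.
    have [V0 [oV Vp sVU [C [b [c [beta [_ [K [lam hl]]]]]]]]] := hlin p Up.
    exact: ((onlyif_point hn hsmooth hsym hnondeg oV sVU hl Vp).1 i j k).
  move=> i j p Up.
  have [V0 [oV Vp sVU [C [b [c [beta [_ [K [lam hl]]]]]]]]] := hlin p Up.
  exact: (onlyif_flat hn hsmooth hsym hnondeg oV sVU hl Vp i j).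
move=> [ha hf] p0 Up0.
have : nbhs p0 U by apply: open_nbhs_nbhs.
move=> /nbhs_ballP [r r0 hball].
exact: (if_local hn hU hsmooth hsym hnondeg ha hf r0 hball).
Qed.
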